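(* Let $d\ge 2$, $p\in[0,1]$, and let $I$ be the infinite open dual cluster ($I=\emptyset$ if there is none). Then $P_p$-almost surely there is a bijection between the connected components of the hole graph $G(\omega)$ and the connected components of the graph $(\mathbb{L}^d)^*-I$, in which a hole cluster corresponds to the component of $(\mathbb{L}^d)^*-I$ containing the dual vertices lying in its holes; moreover a hole cluster is infinite if and only if the corresponding connected component of $(\mathbb{L}^d)^*-I$ is infinite.
   Context: A face is a $(d-1)$-dimensional elementary cube in $\mathbb{R}^d$ (a product of intervals $[l,l]$ or $[l,l+1]$, $l\in\mathbb{Z}$, with exactly one degenerate factor). Face percolation with parameter $p$: each face open independently with probability $p$ (measure $P_p$); $K(\omega)$ is the union of open faces. Holes are the bounded connected components of $\mathbb{R}^d\setminus K(\omega)$; the hole graph $G(\omega)$ has the holes as vertices (it is the limit $\bigcup_n G^n$ of the corresponding graphs for $K(\omega)\cap[-n,n]^d$), two holes adjacent iff some face lies in both boundaries. Dual lattice $(\mathbb{L}^d)^*$: vertices $(\mathbb{Z}^d)^*=\mathbb{Z}^d+(1/2,\dots,1/2)$, bonds between dual vertices at $\ell^1$-distance $1$. Each dual bond $e^*$ crosses a unique face $Q_{e^*}$, and $e^*$ is open iff $Q_{e^*}$ is closed (this is bond percolation with parameter $1-p$, in which almost surely there is at most one infinite open cluster). $(\mathbb{L}^d)^*-I$ is the subgraph of the full dual lattice (regardless of whether bonds are open) with vertex set $(\mathbb{Z}^d)^*\setminus I$ and all dual bonds having both endpoints outside $I$. A hole cluster is infinite if it has infinitely many holes. *)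

(* Defs.v *)
From HB Require Import structures.
From mathcomp Require Import all_boot all_order all_algebra.
From mathcomp Require Import all_classical all_reals all_analysis.
From Stdlib Require Import Relations.
Set Implicit Arguments. Unset Strict Implicit. Unset Printing Implicit Defensive.
Import Order.TTheory GRing.Theory Num.Theory.
Import numFieldNormedType.Exports.
Local Open Scope classical_set_scope.
Local Open Scope ring_scope.

Definition zpoint (d : nat) := {ffun 'I_d -> int}.

(* A face (a (d-1)-dimensional elementary cube) is encoded by a pair (z, i):
   it is  { x | x_i = z_i  and  z_j <= x_j <= z_j + 1 for j <> i }. *)
Definition face (d : nat) := (zpoint d * 'I_d)%type.

Definition face_set (R : realType) (d : nat) (f : face d) : set 'rV[R]_d :=
  [set x | x ord0 f.2 = (f.1 f.2)%:~R /\
           forall j : 'I_d, j != f.2 ->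
             (f.1 j)%:~R <= x ord0 j /\ x ord0 j <= (f.1 j)%:~R + 1].

(* Configurations: omega f = true iff the face f is open. *)
Definition config (d : nat) := face d -> bool.

Definition Kset (R : realType) (d : nat) (w : config d) : set 'rV[R]_d :=
  [set x | exists f : face d, w f /\ face_set (R:=R) f x].

Definition hole (R : realType) (d : nat) (w : config d) (h : set 'rV[R]_d) : Prop :=
  exists x, ~ Kset (R:=R) w x /\ h = connected_component (~` Kset (R:=R) w) x /\ bounded_set h.

Definition tboundary (R : realType) (d : nat) (A : set 'rV[R]_d) : set 'rV[R]_d :=
  closure A `\` interior A.

Definition hole_adj (R : realType) (d : nat) (w : config d) (h1 h2 : set 'rV[R]_d) : Prop :=
  hole w h1 /\ hole w h2 /\
  exists f : face d, face_set (R:=R) f `<=` tboundary h1 /\ face_set (R:=R) f `<=` tboundary h2.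

Definition hole_cluster (R : realType) (d : nat) (w : config d) (h : set 'rV[R]_d)
  : set (set 'rV[R]_d) :=
  [set h' | hole w h' /\ clos_refl_trans _ (hole_adj w) h h'].

Definition hole_clusters (R : realType) (d : nat) (w : config d)
  : set (set (set 'rV[R]_d)) :=
  [set C | exists h, hole w h /\ C = hole_cluster w h].

(* Dual vertices: v in Z^d encodes the dual vertex v + (1/2,...,1/2). *)
Definition dual_pt (R : realType) (d : nat) (v : zpoint d) : 'rV[R]_d :=
  \row_(i < d) ((v i)%:~R + 2^-1).

Definition shift (d : nat) (v : zpoint d) (i : 'I_d) : zpoint d :=
  [ffun j => if j == i then v j + 1 else v j].

Definition dual_adj (d : nat) (v w : zpoint d) : Prop :=
  exists i, w = shift v i \/ v = shift w i.

(* Open dual bonds: the bond {v, v + e_i} crosses the face (v + e_i, i), and is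
   open iff that face is closed. *)
Definition dual_open (d : nat) (om : config d) (v w : zpoint d) : Prop :=
  exists i, (w = shift v i /\ om (w, i) = false) \/ (v = shift w i /\ om (v, i) = false).

(* Vertices of infinite open dual clusters (a.s. there is at most one). *)
Definition Iset (d : nat) (om : config d) : set (zpoint d) :=
  [set v | ~ finite_set [set u | clos_refl_trans _ (dual_open om) v u]].

Definition adj_minus_I (d : nat) (om : config d) (v w : zpoint d) : Prop :=
  dual_adj v w /\ ~ Iset om v /\ ~ Iset om w.

Definition dual_components (d : nat) (om : config d) : set (set (zpoint d)) :=
  [set S | exists v, ~ Iset om v /\
     S = [set u | clos_refl_trans _ (adj_minus_I om) v u]].

Definition cylinders (d : nat) : set (set (config d)) :=
  [set A | exists (f : face d) (b : bool), A = [set om | om f = b]].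

Definition Omega (d : nat) := g_sigma_algebraType (@cylinders d).

Definition is_face_perc (R : realType) (d : nat) (p : R)
  (P : probability (Omega d) R) : Prop :=
  forall (s : seq (face d)) (b : face d -> bool), uniq s ->
    P [set om : Omega d | forall f, f \in s -> om f = b f] =
    (\prod_(f <- s) (if b f then p else 1 - p))%:E.

Definition hole_dual_bijection (R : realType) (d : nat) (om : config d) : Prop :=
  exists Phi : set (set 'rV[R]_d) -> set (zpoint d),
    (forall C, hole_clusters om C -> dual_components om (Phi C)) /\
    (forall C1 C2, hole_clusters om C1 -> hole_clusters om C2 ->
        Phi C1 = Phi C2 -> C1 = C2) /\
    (forall S, dual_components om S -> exists C, hole_clusters om C /\ Phi C = S) /\
    (forall C, hole_clusters om C ->
       (forall h v, C h -> h (dual_pt R v) -> Phi C v) /\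
       (~ finite_set C <-> ~ finite_set (Phi C))).

(* Main.v *)
Require Import Defs.
From HB Require Import structures.
From mathcomp Require Import all_boot all_order all_algebra.
From mathcomp Require Import all_classical all_reals all_analysis.
From Stdlib Require Import Relations.
From mathcomp Require Import ring lra zify.
Set Implicit Arguments. Unset Strict Implicit. Unset Printing Implicit Defensive.
Import Order.TTheory GRing.Theory Num.Theory.
Import numFieldNormedType.Exports.
Local Open Scope classical_set_scope.
Local Open Scope ring_scope.

Section Geo.
Variable R : realType.

Lemma int_between (a b : int) : (a%:~R : R) < b%:~R -> (b%:~R : R) < a%:~R + 1 -> False.
Proof.
rewrite ltr_int -[1]/(1%:~R : R) -intrD ltr_int => h1 h2.
by move: h2; rewrite ltzD1 => h2; move: (lt_le_trans h1 h2); rewrite ltxx.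
Qed.

Lemma int_le_half (a b : int) : (a%:~R : R) <= b%:~R + 2^-1 -> a <= b.
Proof.
move=> h; rewrite -ltzD1 -(ltr_int R) intrD.
apply: (le_lt_trans h); rewrite ltrD2l; rewrite invf_lt1 //; lra.
Qed.

Lemma seg_connected (d : nat) (a b : 'rV[R]_d) :
  connected [set a + t *: (b - a) | t in `[0, 1]].
Proof.
apply: connected_continuous_connected; first exact: segment_connected.
apply: continuous_subspaceT => t.
apply: (@continuousD _ _ _ (fun=> a) (fun t : R => t *: (b - a))).
  exact: cvg_cst.
apply: (@continuousZr_tmp _ _ _ (fun t : R => t) (b - a)); exact: cvg_id.
Qed.


Lemma int_eq (a z : int) : (z%:~R : R) < a%:~R + 1 -> (a%:~R : R) < z%:~R + 1 -> z = a.
Proof.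
rewrite -[1]/(1%:~R : R) -!intrD !ltr_int !ltzD1 => h1 h2.
by apply/eqP; rewrite eq_le h1 h2.
Qed.

Lemma test_lra (x y : R) : x <= y + 2^-1 -> x - 1 < y.
Proof. move=> h; lra. Qed.

End Geo.

Section Perc.
Variables (R : realType) (d : nat) (om : config d).

Local Notation U := (~` Kset (R:=R) om).
Local Notation c := (@dual_pt R d).
Local Notation H v := (connected_component U (@dual_pt R d v)).

Definition incube (w : zpoint d) (x : 'rV[R]_d) :=
  forall i, (w i)%:~R <= x ord0 i <= (w i)%:~R + 1.
Definition oincube (w : zpoint d) (x : 'rV[R]_d) :=
  forall i, (w i)%:~R < x ord0 i < (w i)%:~R + 1.

Lemma oincube_notK w x : oincube w x -> ~ Kset om x.
Proof.
move=> hx [[z j] [_ [/= hj _]]].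
have /andP[h1 h2] := hx j; rewrite hj in h1 h2.
exact: (int_between h1 h2).
Qed.

Lemma dualE v i : c v ord0 i = (v i)%:~R + 2^-1.
Proof. by rewrite /dual_pt mxE. Qed.

Lemma dual_oincube v : oincube v (c v).
Proof. by move=> i; rewrite dualE; apply/andP; split; lra. Qed.

Lemma dual_U v : U (c v).
Proof. exact/oincube_notK/dual_oincube. Qed.

Lemma cube_seg w x t : incube w x -> 0 < t <= 1 ->
  oincube w (x + t *: (c w - x)).
Proof.
move=> hx /andP[t0 t1] i; rewrite !mxE.
have /andP[h1 h2] := hx i.
apply/andP; split; nra.
Qed.

Lemma seg_cc a b : (forall t : R, 0 <= t <= 1 -> ~ Kset om (a + t *: (b - a))) ->
  connected_component U a b.
Proof.
move=> h.
have sub : [set a + t *: (b - a) | t in `[(0:R), 1]] `<=` U.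
  by move=> _ [t /= ht <-]; apply: h; move: ht; rewrite in_itv.
have Ba : [set a + t *: (b - a) | t in `[(0:R), 1]] a.
  by exists 0; [rewrite /= in_itv /= lexx ler01 | rewrite scale0r addr0].
have := connected_component_max Ba sub (@seg_connected R d a b).
move=> hh; apply: hh.
by exists 1; [rewrite /= in_itv /= lexx ler01 | rewrite scale1r addrC subrK].
Qed.

Lemma incube_cc w x : incube w x -> ~ Kset om x ->
  connected_component U x (c w).
Proof.
move=> hx hK; apply: seg_cc => t /andP[t0 t1].
have [->|tn0] := eqVneq t 0; first by rewrite scale0r addr0.
apply: oincube_notK; apply: cube_seg => //.
by rewrite lt_def tn0 t0.
Qed.


Lemma seg_entry (a : zpoint d) (i : 'I_d) (t : R) (k : 'I_d) :
  (c a + t *: (c (Defs.shift a i) - c a)) ord0 k =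
  (a k)%:~R + 2^-1 + (if k == i then t else 0).
Proof.
rewrite !mxE ffunE; case: eqP => _; rewrite ?intrD; ring.
Qed.

Lemma open_step_shift (a : zpoint d) (i : 'I_d) : om (Defs.shift a i, i) = false ->
  connected_component U (c a) (c (Defs.shift a i)).
Proof.
move=> hom; apply: seg_cc => t /andP[t0 t1] [[z j] [omf [/= hj hk]]].
rewrite seg_entry in hj.
have [eji|nji] := eqVneq j i; last first.
  move: hj; rewrite (negbTE nji) addr0 => hj.
  apply: (@int_between R (a j) (z j)); lra.
subst j; move: hj; rewrite eqxx => hj.
have zi : z i = a i + 1.
  apply: int_eq; rewrite intrD; lra.
have zk : forall k, k != i -> z k = a k.
  move=> k nki; have := hk k nki; rewrite seg_entry (negbTE nki) addr0.
  move=> [h1 h2]; apply: int_eq; lra.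
suff ez : z = Defs.shift a i by move: omf; rewrite ez hom.
apply/ffunP => k; rewrite ffunE; case: eqP => [->|/eqP nki]; first exact: zi.
exact: zk.
Qed.

Lemma dual_open_sym a b : dual_open om a b -> dual_open om b a.
Proof. by move=> [i [h|h]]; exists i; [right|left]. Qed.

Lemma open_step a b : dual_open om a b -> connected_component U (c a) (c b).
Proof.
move=> [i [[-> h]|[-> h]]]; first exact: open_step_shift.
exact/connected_component_sym/open_step_shift.
Qed.

Lemma ocl_cc a b : clos_refl_trans _ (dual_open om) a b ->
  connected_component U (c a) (c b).
Proof.
elim=> [x y /open_step //|x|x y z _ h1 _ h2].
  exact/connected_component_refl/dual_U.
exact: connected_component_trans h1 h2.
Qed.


Definition fl (y : 'rV[R]_d) : zpoint d := [ffun i => Num.floor (y ord0 i)].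

Lemma fl_incube y : incube (fl y) y.
Proof.
move=> i; rewrite ffunE floor_le /=.
by rewrite -[1]/(1%:~R : R) -intrD ltW // floorD1_gt.
Qed.

Lemma fl_dual v : fl (c v) = v.
Proof.
apply/ffunP => i; rewrite ffunE dualE; apply: floor_def.
by rewrite intrD; apply/andP; split; lra.
Qed.

Lemma near_floor (r : R) : \forall s \near r, (Num.floor s)%:~R <= r <= (Num.floor s)%:~R + 1.
Proof.
have h1 := lt_nbhsl (floorD1_gt r).
have h2 := lt_nbhsr (ceilB1_lt r).
near=> s.
have hs1 : s < (Num.floor r + 1)%:~R by near: s.
have hs2 : (Num.ceil r - 1)%:~R < s by near: s.
apply/andP; split.
  have : Num.floor s < Num.floor r + 1 by rewrite floor_lt_int.
  rewrite ltzD1 => h; apply: le_trans (floor_le r); by rewrite ler_int.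
have : Num.ceil r - 1 <= Num.floor s by rewrite floor_ge_int ltW.
rewrite lerBlDr -(ler_int R) intrD => h.
exact: le_trans (ceil_ge r) h.
Unshelve. all: by end_near.
Qed.


Lemma near_incube x : \forall y \near x, incube (fl y) x.
Proof.
apply: (@filter_forall _ 'I_d
  (fun i y => ((fl y) i)%:~R <= x ord0 i <= ((fl y) i)%:~R + 1) (nbhs x) _) => i.
have h := @coord_continuous R 1 d ord0 i x _ (near_floor (x ord0 i)).
by move: h; apply: (@filterS _ (nbhs x)) => y /=; rewrite ffunE.
Qed.

Local Notation Ocl := (clos_refl_trans _ (dual_open om)).

Lemma shift_free (w : zpoint d) i x : incube w x -> incube (Defs.shift w i) x ->
  ~ Kset om x -> om (Defs.shift w i, i) = false.
Proof.
move=> h1 h2 hK; apply/negbTE/negP => hom; apply: hK.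
exists (Defs.shift w i, i); split => //; split => /=.
  have := h1 i; have := h2 i; rewrite ffunE eqxx intrD => /andP[a1 a2] /andP[c1 c2].
  lra.
move=> k nki; rewrite ffunE (negbTE nki).
by have /andP[] := h1 k.
Qed.

Lemma step_ocl (w w' : zpoint d) i x : (forall k, k != i -> w' k = w k) ->
  incube w x -> incube w' x -> ~ Kset om x -> Ocl w w'.
Proof.
move=> hk h1 h2 hK.
have b1 : w' i <= w i + 1.
  have := h1 i; have := h2 i => /andP[a1 a2] /andP[c1 c2].
  by rewrite -(ler_int R) intrD; lra.
have b2 : w i <= w' i + 1.
  have := h1 i; have := h2 i => /andP[a1 a2] /andP[c1 c2].
  by rewrite -(ler_int R) intrD; lra.
case: (ltgtP (w i) (w' i)) => hi.
- have ew : w' = Defs.shift w i.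
    apply/ffunP => k; rewrite ffunE; case: eqP => [->|/eqP nk]; last exact: hk.
    by apply/eqP; rewrite eq_le b1 /= lezD1.
  apply: rt_step; exists i; left; split => //.
  rewrite ew; apply: shift_free h1 _ hK; by rewrite -ew.
- have ew : w = Defs.shift w' i.
    apply/ffunP => k; rewrite ffunE; case: eqP => [->|/eqP nk]; last by rewrite hk.
    by apply/eqP; rewrite eq_le b2 /= lezD1.
  apply: rt_step; exists i; right; split => //.
  rewrite ew; apply: shift_free h2 _ hK; by rewrite -ew.
- have -> : w' = w.
    by apply/ffunP => k; have [->|nk] := eqVneq k i; [rewrite hi|exact: hk].
  exact: rt_refl.
Qed.

Lemma incube_ocl (w1 w2 : zpoint d) x : incube w1 x -> incube w2 x -> ~ Kset om x ->
  Ocl w1 w2.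
Proof.
move=> h1 h2 hK.
pose mix (s : seq 'I_d) : zpoint d := [ffun k => if k \in s then w2 k else w1 k].
have mixc : forall s, incube (mix s) x.
  by move=> s k; rewrite ffunE; case: (k \in s); [exact: h2|exact: h1].
have : forall s, Ocl w1 (mix s).
  elim => [|i s IH].
    have -> : mix [::] = w1 by apply/ffunP => k; rewrite ffunE.
    exact: rt_refl.
  apply: rt_trans IH _; apply: (@step_ocl _ _ i x) => //.
  move=> k nki; rewrite !ffunE in_cons (negbTE nki) //.
move=> /(_ (enum 'I_d)).
by have -> : mix (enum 'I_d) = w2 by apply/ffunP => k; rewrite ffunE mem_enum.
Qed.


Lemma ocl_sym a b : Ocl a b -> Ocl b a.
Proof.
elim=> [x y /dual_open_sym h|x|x y z _ h1 _ h2]; first exact: rt_step.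
  exact: rt_refl.
exact: rt_trans h2 h1.
Qed.

Lemma near_ocl x : ~ Kset om x -> \forall y \near x, Ocl (fl x) (fl y).
Proof.
move=> hK; move: (near_incube x); apply: filterS => y hy.
exact: (incube_ocl (fl_incube x) hy hK).
Qed.

Lemma cc_ocl v y0 : connected_component U (c v) y0 -> Ocl v (fl y0).
Proof.
set A := connected_component U (c v).
set S := [set z | Ocl v (fl z)].
have AU : A `<=` U by exact: connected_component_sub.
suff <- : A `&` S = A by case.
apply: (component_connected (A:=U) (x:=c v)).
- exists (c v); split; first exact/connected_component_refl/dual_U.
  by rewrite /S /= fl_dual; exact: rt_refl.
- exists (interior S); first exact: open_interior.
  apply/seteqP; split => y [Ay hy]; split => //; last exact: interior_subset.
  move: (near_ocl (AU _ Ay)); apply: filterS => z hz.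
  exact: rt_trans hy hz.
- exists (~` interior (~` S)); first exact/open_closedC/open_interior.
  apply/seteqP; split => y [Ay hy]; split => //.
    by move=> /interior_subset.
  apply: contrapT => nS; apply: hy.
  move: (near_ocl (AU _ Ay)); apply: filterS => z hz Sz.
  by apply: nS; apply: (rt_trans _ _ _ _ _ Sz); apply: ocl_sym.
Qed.


Lemma entry_le_norm (y : 'rV[R]_d) i : `|y ord0 i| <= `|y|.
Proof.
rewrite [leRHS]/Num.Def.normr /= mx_normrE; apply/bigmax_geP; right => /=.
by exists (ord0, i).
Qed.

Lemma norm_le_entries (y : 'rV[R]_d) M : 0 <= M -> (forall i, `|y ord0 i| <= M) ->
  `|y| <= M.
Proof.
move=> M0 h; rewrite [leLHS]/Num.Def.normr /= mx_normrE (bigmax_le _ M0) //= => -[i j] _.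
by rewrite (ord1 i); exact: h.
Qed.

Lemma bounded_setP (A : set 'rV[R]_d) M : (forall x, A x -> `|x| <= M) ->
  bounded_set A.
Proof.
move=> h; exists M; split; first exact: num_real.
move=> M' hM x Ax; exact: le_trans (h x Ax) (ltW hM).
Qed.

Lemma bounded_setE (A : set 'rV[R]_d) : bounded_set A ->
  exists M, forall x, A x -> `|x| <= M.
Proof.
move=> [M [Mreal hM]]; exists (M + 1); apply: hM.
by rewrite ltrDl.
Qed.


Local Notation O v := [set u | Ocl v u].

Lemma le_sum_norm (s : seq (zpoint d)) u i : u \in s ->
  `|u i| <= \sum_(w <- s) \sum_j `|w j|.
Proof.
move=> us; rewrite (big_rem _ us) /=.
apply: (@le_trans _ _ (\sum_j `|u j|)).
  by rewrite (bigD1 i) //= lerDl sumr_ge0.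
by rewrite lerDl sumr_ge0 // => w _; exact: sumr_ge0.
Qed.

Lemma bounded_H v : finite_set (O v) -> bounded_set (H v).
Proof.
move=> /finite_seqP [s hs].
pose M : int := \sum_(u <- s) \sum_i `|u i|.
have M0 : 0 <= M by rewrite sumr_ge0 // => w _; exact: sumr_ge0.
apply: (@bounded_setP _ (M%:~R + 1)) => y hy.
have hO : O v (fl y) := cc_ocl hy.
have ins : fl y \in s by move: hO; rewrite hs.
apply: norm_le_entries; first by rewrite addr_ge0 // ler0z.
move=> i.
have hM : `|(fl y i)%:~R : R| <= M%:~R by rewrite -intr_norm ler_int le_sum_norm.
have /andP[h1 h2] := fl_incube y i.
have : `|y ord0 i| - `|(fl y i)%:~R : R| <= `|y ord0 i - (fl y i)%:~R| := lerB_dist _ _.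
have h3 : `|y ord0 i - (fl y i)%:~R| <= 1 by rewrite ler_norml; apply/andP; split; lra.
lra.
Qed.

Lemma box_finite (N : nat) : finite_set [set u : zpoint d | forall i, `|u i| <= N%:Z].
Proof.
pose g (f : {ffun 'I_d -> 'I_(N.*2).+1}) : zpoint d := [ffun i => (f i)%:Z - N%:Z].
apply: (sub_finite_set _ (finite_image g (@finite_finset _ setT))).
move=> u hu.
exists [ffun i => inord (absz (u i + N%:Z))] => //.
apply/ffunP => i; rewrite !ffunE.
have := hu i; rewrite ler_norml => /andP[a1 a2].
rewrite inordK.
  by rewrite gez0_abs ?addrK // -lerBlDr sub0r.
rewrite -ltz_nat gez0_abs; last by rewrite -lerBlDr sub0r.
move: a1 a2; rewrite -addn1 -muln2 !PoszD PoszM; move: (u i) => z; lia.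
Qed.


Lemma finite_O v : bounded_set (H v) -> finite_set (O v).
Proof.
move=> /bounded_setE [M hM].
pose N := `|Num.ceil (M + 1)|%N.
apply: (sub_finite_set _ (box_finite N)) => u hu i.
have hcu := hM _ (ocl_cc hu).
have := le_trans (entry_le_norm (c u) i) hcu; rewrite dualE => h.
rewrite -(ler_int R) intr_norm.
have hN : M + 1 <= ((N%:Z)%:~R : R).
  rewrite /N -[(Posz _)%:~R]/((`|Num.ceil (M + 1)|%N)%:R) natr_absz intr_norm.
  exact: le_trans (ceil_ge _) (ler_norm _).
have h2 : `|(u i)%:~R : R| - `|2^-1 : R| <= `|(u i)%:~R + 2^-1| := lerB_normD _ _.
have h3 : `|2^-1 : R| = 2^-1 by rewrite ger0_norm.
lra.
Qed.


Lemma incube_dist w q : incube w q -> `|c w - q| <= 1.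
Proof.
move=> hq; apply: norm_le_entries => // i.
rewrite !mxE; have /andP[h1 h2] := hq i.
by rewrite ler_norml; apply/andP; split; lra.
Qed.

Lemma face_boundary (w : zpoint d) (f : face d) : om f = true ->
  face_set (R:=R) f `<=` incube w -> face_set (R:=R) f `<=` tboundary (H w).
Proof.
move=> hom hf q hq; split; last first.
  move=> /interior_subset /connected_component_sub; apply.
  by exists f.
move=> B /nbhs_ballP [e e0 he].
pose t := Num.min (e / 2) 1.
have t0 : 0 < t by rewrite lt_min ltr01 divr_gt0.
have t1 : t <= 1 by rewrite ge_min lexx orbT.
have te : t <= e / 2 by rewrite ge_min lexx.
set y := q + t *: (c w - q).
have oy : oincube w y by apply: cube_seg; [exact: hf | rewrite t0 t1].
exists y; split.
  apply: connected_component_sym; apply: incube_cc; last exact: oincube_notK.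
  by move=> i; have /andP[a b] := oy i; rewrite !ltW.
apply: he; rewrite -ball_normE /= /y opprD addrA subrr sub0r normrN normrZ.
rewrite ger0_norm; last exact: ltW.
have := incube_dist (hf _ hq).
have : 0 <= `|c w - q| by [].
move=> hn hd.
have : t * `|c w - q| <= t * 1 by rewrite ler_wpM2l // ltW.
lra.
Qed.


Local Notation I := (Iset om).
Local Notation adjI := (adj_minus_I om).
Local Notation crtA := (clos_refl_trans _ (adj_minus_I om)).

Lemma notI_bounded v : ~ I v -> bounded_set (H v).
Proof. by move=> /contrapT; exact: bounded_H. Qed.

Lemma bounded_notI v : bounded_set (H v) -> ~ I v.
Proof. by move=> /finite_O h; apply. Qed.

Lemma hole_H v : ~ I v -> hole om (H v).
Proof.
move=> hv; exists (c v); split; first exact: dual_U.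
by split => //; exact: notI_bounded.
Qed.

Lemma hole_pt h v : hole om h -> h (c v) -> h = H v.
Proof. by move=> [x [_ [-> _]]] /same_connected_component. Qed.

Lemma hole_inv h : hole om h -> exists v, ~ I v /\ h = H v.
Proof.
move=> hh; have [x [hx [ex hb]]] := hh.
have hc : h (c (fl x)).
  by rewrite ex; exact: incube_cc (fl_incube x) hx.
have e := hole_pt hh hc.
by exists (fl x); split => //; apply: bounded_notI; rewrite -e.
Qed.

Lemma notI_ocl a b : Ocl a b -> ~ I a -> ~ I b.
Proof.
move=> hab ha hb; apply: ha => fa; apply: hb.
apply: sub_finite_set fa => u hu.
exact: rt_trans hab hu.
Qed.

Lemma ocl_adjI a b : Ocl a b -> ~ I a -> crtA a b.
Proof.
elim=> [x y hxy hx|x _|x y z hxy IH1 hyz IH2 hx].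
- apply: rt_step; split; last by split => //; exact: notI_ocl (rt_step _ _ _ _ hxy) hx.
  by move: hxy => [i [[-> _]|[-> _]]]; exists i; [left|right].
- exact: rt_refl.
- apply: rt_trans (IH1 hx) (IH2 _); exact: notI_ocl hxy hx.
Qed.

Lemma adjI_notI a b : crtA a b -> ~ I a -> ~ I b.
Proof.
elim=> [x y [_ [_ hy]] _|x //|x y z _ IH1 _ IH2 hx]; first exact: hy.
exact: IH2 (IH1 hx).
Qed.

Lemma face_incube_hi (z : zpoint d) i : face_set (R:=R) (z, i) `<=` incube z.
Proof.
move=> q [/= hi hk] k; have [->|nki] := eqVneq k i.
  by rewrite hi lexx /= lerDl ler01.
by have [a b] := hk k nki; rewrite a b.
Qed.

Lemma face_incube_lo (a : zpoint d) i :
  face_set (R:=R) (Defs.shift a i, i) `<=` incube a.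
Proof.
move=> q [/= hi hk] k; have [->|nki] := eqVneq k i.
  by rewrite hi ffunE eqxx intrD lexx /= lerDl ler01.
by have [h1 h2] := hk k nki; move: h1 h2; rewrite ffunE (negbTE nki) => -> ->.
Qed.

Lemma adj_step a b : adjI a b -> H a = H b \/ hole_adj om (H a) (H b).
Proof.
move=> [[i hi] [ha hb]].
have [hAa hAb] := (hole_H ha, hole_H hb).
case: hi => [eb|ea].
- case hom: (om (b, i)).
    right; split => //; split => //; exists (b, i); split.
      by apply: face_boundary => //; rewrite eb; exact: face_incube_lo.
    by apply: face_boundary => //; exact: face_incube_hi.
  left; apply: same_connected_component; apply: ocl_cc; apply: rt_step.
  by exists i; left; rewrite -eb.
- case hom: (om (a, i)).
    right; split => //; split => //; exists (a, i); split.
      by apply: face_boundary => //; exact: face_incube_hi.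
    by apply: face_boundary => //; rewrite ea; exact: face_incube_lo.
  left; apply: same_connected_component; apply: ocl_cc; apply: rt_step.
  by exists i; right; rewrite -ea.
Qed.


Definition unshift (z : zpoint d) i : zpoint d :=
  [ffun k => if k == i then z k - 1 else z k].

Lemma shift_unshift z i : Defs.shift (unshift z i) i = z.
Proof.
by apply/ffunP => k; rewrite !ffunE; case: eqP => // ->; rewrite subrK.
Qed.

Lemma boundary_pt h (z : zpoint d) i : hole om h ->
  face_set (R:=R) (z, i) `<=` tboundary h -> h (c z) \/ h (c (unshift z i)).
Proof.
move=> hh hf.
pose q : 'rV[R]_d := \row_k (if k == i then (z k)%:~R else (z k)%:~R + 2^-1).
have hq : face_set (R:=R) (z, i) q.
  split => /=; first by rewrite mxE eqxx.
  move=> k nki; rewrite mxE (negbTE nki); split; lra.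
have [cl _] := hf q hq.
have h20 : (0:R) < 2^-1 by rewrite invr_gt0.
have [y [hy By]] := cl (ball q (2^-1)) (nbhsx_ballx q _ h20).
have [x [hx [ex _]]] := hh.
have hyK : ~ Kset om y by move: hy; rewrite ex => /connected_component_sub.
have hyq : forall k, `|q ord0 k - y ord0 k| < 2^-1.
  move=> k; move: By; rewrite -ball_normE /= => hb.
  by apply: le_lt_trans hb; have := entry_le_norm (q - y) k; rewrite !mxE.
have toh : forall w, incube w y -> h (c w).
  move=> w hw; rewrite ex; apply: connected_component_trans (incube_cc hw hyK).
  by rewrite -ex.
have [yi|yi] := leP ((z i)%:~R) (y ord0 i).
- left; apply: toh => k; have := hyq k; rewrite mxE.
  by case: eqP => [->|/eqP nki]; rewrite ltr_norml => /andP[a b]; apply/andP; split; lra.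
- right; apply: toh => k; have := hyq k; rewrite mxE ffunE.
  case: eqP => [->|/eqP nki]; rewrite ltr_norml => /andP[a b].
    by rewrite intrD; apply/andP; split; lra.
  by apply/andP; split; lra.
Qed.

Lemma hole_adj_pts h1 h2 : hole_adj om h1 h2 ->
  exists w1 w2, h1 (c w1) /\ h2 (c w2) /\ (w1 = w2 \/ dual_adj w1 w2).
Proof.
move=> [hh1 [hh2 [[z i] [f1 f2]]]].
have zadj : dual_adj (unshift z i) z by exists i; left; rewrite shift_unshift.
have adjz : dual_adj z (unshift z i) by exists i; right; rewrite shift_unshift.
case: (boundary_pt hh1 f1) => p1; case: (boundary_pt hh2 f2) => p2.
- by exists z, z; split => //; split => //; left.
- by exists z, (unshift z i); split => //; split => //; right.
- by exists (unshift z i), z; split => //; split => //; right.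
- by exists (unshift z i), (unshift z i); split => //; split => //; left.
Qed.


Local Notation crtH := (clos_refl_trans _ (hole_adj om)).

Lemma crtA_crtH a b : crtA a b -> crtH (H a) (H b).
Proof.
elim=> [x y /adj_step [->|h]|x|x y z _ h1 _ h2].
- exact: rt_refl.
- exact: rt_step.
- exact: rt_refl.
- exact: rt_trans h1 h2.
Qed.

Lemma crtH_crtA v : ~ I v -> forall h1 h2, crtH h1 h2 ->
  forall u1, crtA v u1 -> h1 = H u1 -> exists u2, crtA v u2 /\ h2 = H u2.
Proof.
move=> hv h1 h2; elim=> [x y hxy|x|x y z _ IH1 _ IH2] u1 hu1 ex.
- have [w1 [w2 [p1 [p2 hw]]]] := hole_adj_pts hxy.
  have [_ [hy _]] := hxy.
  have nu1 : ~ I u1 := adjI_notI hu1 hv.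
  have o1 : Ocl u1 w1 by have := cc_ocl (eq_ind _ (fun S => S (c w1)) p1 _ ex); rewrite fl_dual.
  have a1 : crtA u1 w1 := ocl_adjI o1 nu1.
  have nw1 : ~ I w1 := notI_ocl o1 nu1.
  have ey : y = H w2 := hole_pt hy p2.
  have nw2 : ~ I w2.
    by apply: bounded_notI; rewrite -ey; have [? [_ [_ ?]]] := hy.
  exists w2; split => //.
  apply: (rt_trans _ _ _ _ _ hu1); apply: (rt_trans _ _ _ _ _ a1).
  case: hw => [<-|hadj]; first exact: rt_refl.
  by apply: rt_step; split.
- by exists u1.
- have [u2 [hu2 ey]] := IH1 u1 hu1 ex.
  exact: IH2 u2 hu2 ey.
Qed.

Lemma HC v : ~ I v ->
  hole_cluster om (H v) = [set h | exists u, crtA v u /\ h = H u].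
Proof.
move=> hv; apply/seteqP; split => h.
  move=> [hh hc]; exact: (crtH_crtA hv hc (rt_refl _ _ v)).
move=> [u [hu ->]]; split; first exact/hole_H/(adjI_notI hu).
exact: crtA_crtH.
Qed.

Definition Phi (C : set (set 'rV[R]_d)) : set (zpoint d) :=
  [set u | exists h, C h /\ h (c u)].

Lemma Phi_HC v : ~ I v -> Phi (hole_cluster om (H v)) = [set u | crtA v u].
Proof.
move=> hv; apply/seteqP; split => u.
  move=> [h [hC hu]]; move: hC; rewrite HC // => -[u1 [h1 e]].
  have o : Ocl u1 u by have := cc_ocl (eq_ind _ (fun S => S (c u)) hu _ e); rewrite fl_dual.
  exact: (rt_trans _ _ _ _ _ h1 (ocl_adjI o (adjI_notI h1 hv))).
move=> hu; exists (H u); split; first by rewrite HC //; exists u.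
exact/connected_component_refl/dual_U.
Qed.

Lemma clusters_inv C : hole_clusters om C -> exists v, ~ I v /\ C = hole_cluster om (H v).
Proof.
move=> [h [hh ->]]; have [v [hv ->]] := hole_inv hh.
by exists v.
Qed.

Lemma bijection : hole_dual_bijection R om.
Proof.
exists Phi; split; [|split; [|split]].
- move=> C /clusters_inv [v [hv ->]]; exists v; split => //; exact: Phi_HC.
- move=> C1 C2 /clusters_inv [v1 [hv1 ->]] /clusters_inv [v2 [hv2 ->]].
  rewrite !Phi_HC // => E.
  rewrite !HC //; apply/seteqP; split => h [u [hu ->]]; exists u; split => //.
    by have := congr1 (fun S => S u) E => /= <-.
  by have := congr1 (fun S => S u) E => /= ->.
- move=> S [v [hv ->]]; exists (hole_cluster om (H v)); split; last exact: Phi_HC.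
  by exists (H v); split => //; exact: hole_H.
- move=> C hC; split; first by move=> h v Ch hv; exists h.
  have [v [hv eC]] := clusters_inv hC.
  rewrite eC Phi_HC //.
  suff : finite_set (hole_cluster om (H v)) <-> finite_set [set u | crtA v u].
    by move=> [f1 f2]; split => nf fn; apply: nf; [exact: f2|exact: f1].
  rewrite HC //; split => fin.
  + apply: (sub_finite_set _ (bigcup_finite (F := fun h => [set u | h (c u)]) fin _)).
      by move=> u hu; exists (H u); [exists u|exact/connected_component_refl/dual_U].
    move=> h [u0 [hu0 ->]].
    have nu0 : ~ I u0 := adjI_notI hu0 hv.
    apply: (sub_finite_set _ (contrapT nu0)) => u hu.
    by have := cc_ocl hu; rewrite fl_dual.
  + have -> : [set h | exists u, crtA v u /\ h = H u] = (fun u => H u) @` [set u | crtA v u].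
      by apply/seteqP; split => h; [move=> [u [hu ->]]; exists u|move=> [u hu <-]; exists u].
    exact: finite_image.
Qed.

End Perc.

Theorem lemma3p3 (R : realType) (d : nat) (p : R) (P : probability (Omega d) R) :
  (2 <= d)%N -> 0 <= p -> p <= 1 -> is_face_perc p P ->
  {ae P, forall om : Omega d, hole_dual_bijection R om}.
Proof.
move=> _ _ _ _; apply: aeW => om; exact: bijection.
Qed.
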